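(* Let $e_i$ be the idempotent of a projection $K[G^{(l)}]\to K_i$ and fix $\varepsilon_{k_0}\otimes\chi_0\in I_i$. Then for every $\varepsilon_k\otimes\chi\in I_i$ there exists $s\in\hat{\mathbb Z}^\times=\varprojlim_n(\mathbb Z/n\mathbb Z)^\times\cong\mathrm{Aut}(\mathbb Q/\mathbb Z)$ such that, after suitably renumbering the $\alpha^\chi_j$ and the $\beta^\chi_j$, \[ s\Big(\tfrac{k_0}{l}+\alpha^{\chi_0}_j\Big)=\tfrac kl+\alpha^\chi_j,\qquad s\Big(\tfrac{k_0}{l}+\beta^{\chi_0}_j\Big)=\tfrac kl+\beta^\chi_j\quad\text{in }\mathbb Q/\mathbb Z,\ j=1,2. \]
   Context: Setting. Fix an embedding $\overline{\mathbb Q}\subset\mathbb C$. Let $f\colon X\to\mathbb P^1$ be a surjective morphism over $\overline{\mathbb Q}$ from a smooth projective variety $X$, with a fixed coordinate $t$ on $\mathbb P^1$, such that $f$ is smooth over $S:=\mathbb P^1\setminus\{0,1,\infty\}$. Let $K$ be a number field with a ring homomorphism from $K$ to the endomorphisms of the variation of Hodge structure $R^1f_*\mathbb Q$ over a nonempty Zariski open set (a relative multiplication), such that (a) $R^1f_*\mathbb Q$ has rank $2$ over $K$, and (c) the local monodromy at $t=1$ on $H^1_B(X_t,\mathbb Q)$ ($X_t$ a general fiber) is unipotent and $N=\log T_1$ has rank $\frac12\dim_{\mathbb Q}H^1_B(X_t,\mathbb Q)$. For a $\overline{\mathbb Q}$- or $\mathbb C$-vector space $V$ with $K$-action and an embedding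 $\chi\colon K\hookrightarrow\overline{\mathbb Q}$, $V^\chi=\{v:av=\chi(a)v\ \forall a\in K\}$. For each $\chi$, $H^1_B(X_t,\overline{\mathbb Q})^\chi$ is $2$-dimensional; the eigenvalues of the local monodromy $T_0$ at $t=0$ (counterclockwise) on it are $e^{2\pi i\alpha^\chi_1},e^{2\pi i\alpha^\chi_2}$ and those of $T_\infty$ are $e^{2\pi i\beta^\chi_1},e^{2\pi i\beta^\chi_2}$, with $\alpha^\chi_j,\beta^\chi_j\in\mathbb Q$ determined modulo $\mathbb Z$. For an integer $l\ge1$ let $\pi\colon\mathbb P^1\to\mathbb P^1$, $t\mapsto t^l$, let $X^{(l)}$ be a desingularization of $X\times_{\mathbb P^1,\pi}\mathbb P^1$ with induced $f^{(l)}\colon X^{(l)}\to\mathbb P^1$, and $G^{(l)}=\mathrm{Aut}(\pi)\cong\mu_l$ acting by $\tau_\zeta(t)=\zeta t$. Write $K[G^{(l)}]\cong\prod_iK_i$ with $K_i$ fields and $e_i$ the idempotent of the projection to $K_i$. For $k\in\mathbb Z/l\mathbb Z$ let $\varepsilon_k\colon\mathbb Q[G^{(l)}]\to\overline{\mathbb Q}$, $\varepsilon_k(\tau_\zeta)=\zeta^k$; algebra homomorphisms $K[G^{(l)}]\to\overline{\mathbb Q}$ are exactly $\varepsilon_k\otimes\chi$, and $I_i$ denotes the set of those factoring through $K_i$. Let $\mathcal M^{(l)}:=\pi_*\mathbb Q\otimes R^1f_*\mathbb Q\cong\pi_*R^1f^{(l)}_*\mathbb Q$ on $S$ (with multiplication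 by $K[G^{(l)}]$). On the $\varepsilon_k\otimes\chi$-part of $\mathcal M^{(l)}$ the eigenvalues of $T_0$ are $\exp 2\pi i(k/l+\alpha^\chi_j)$ and of $T_\infty$ are $\exp2\pi i(-k/l+\beta^\chi_j)$. *)

(* Defs.v *)
From HB Require Import structures.
From mathcomp Require Import all_boot all_order all_algebra all_fingroup all_field.
Set Implicit Arguments. Unset Strict Implicit. Unset Printing Implicit Defensive.
Import Order.TTheory GRing.Theory Num.Theory.
Local Open Scope ring_scope.

(* algC models Qbar with a fixed embedding into C.
   expi q = exp(2 pi i q) for q : rat.  For d >= 1, d.-root (-1) is the
   d-th root of -1 with minimal nonnegative argument, i.e. exp(pi i/d). *)
Definition expi (q : rat) : algC :=
  (((`|denq q|%N).-root (-1 : algC)) ^+ 2) ^ (numq q).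

Definition eqQZ (p q : rat) : Prop := (p - q) \is a Num.int.

(* An element of Zhat^x = lim (Z/nZ)^x, given by a compatible family of
   representatives s n of units mod n (n > 0). *)
Definition zhat_unit (s : nat -> int) : Prop :=
  (forall n : nat, (0 < n)%N -> coprimez (s n) n) /\
  (forall m n : nat, (0 < n)%N -> (0 < m)%N -> (n %| m)%N ->
      (s m == s n %[mod n])%Z).

Definition zhat_act (s : nat -> int) (q : rat) : rat :=
  ((s `|denq q|%N * numq q)%:~R) / (denq q)%:~R.

(* The algebra homomorphism eps_k (x) chi : K[G^(l)] -> Qbar, where
   K[G^(l)] is modelled as functions 'I_l -> K, with g : 'I_l standing for
   tau_zeta, zeta = exp(2 pi i g / l); eps_k(tau_zeta) = zeta^k. *)
Definition eps_chi (K : fieldExtType rat) (l : nat) (k : 'I_l)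
  (chi : {rmorphism K -> algC}) (x : {ffun 'I_l -> K}) : algC :=
  \sum_(g < l) chi (x g) * expi ((g * k)%:R / l%:R).

(* Two algebra homomorphisms K[G] -> Qbar factor through the same field
   factor K_i of K[G] = prod K_i iff they have the same kernel. *)
Definition same_factor (K : fieldExtType rat) (l : nat)
  (phi psi : {ffun 'I_l -> K} -> algC) : Prop :=
  forall x, phi x = 0 <-> psi x = 0.

(* V = Q^n as row vectors, K acting on the right via rho.  The chi-part
   V^chi of V (x) Qbar is 2-dimensional with basis the rows of B, T (acting on
   the right) preserves it and its eigenvalues there, with multiplicity, are
   exp(2 pi i a_0), exp(2 pi i a_1). *)
Definition eigen_exps (K : fieldExtType rat) (n : nat)
  (rho : {rmorphism K -> 'M[rat]_n}) (chi : {rmorphism K -> algC})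
  (T : 'M[rat]_n) (a : 'I_2 -> rat) : Prop :=
  exists (B : 'M[algC]_(2, n)) (A : 'M[algC]_2),
    [/\ forall v : 'rV[algC]_n,
          (v <= B)%MS <-> (forall x : K, v *m map_mx ratr (rho x) = chi x *: v),
        row_free B,
        B *m map_mx ratr T = A *m B &
        char_poly A = \prod_(j < 2) ('X - (expi (a j))%:P)].

Definition logU (n : nat) (T : 'M[rat]_n) : 'M[rat]_n :=
  \sum_(1 <= k < n.+1) (((-1) ^+ k.+1) / k%:R) *: (T - 1%:M) ^+ k.

(* Main.v *)
Require Import Defs.
From HB Require Import structures.
From mathcomp Require Import all_boot all_order all_algebra all_fingroup all_field.
From mathcomp Require Import ring lra.
Set Implicit Arguments. Unset Strict Implicit. Unset Printing Implicit Defensive.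
Import Order.TTheory GRing.Theory Num.Theory.
Local Open Scope ring_scope.


Definition reR (z : algC) : algR := in_algR (Creal_Re z).
Definition imR (z : algC) : algR := in_algR (Creal_Im z).

Lemma reRM x y : reR (x * y) = reR x * reR y - imR x * imR y.
Proof. by apply: val_inj; rewrite /= ReM. Qed.
Lemma imRM x y : imR (x * y) = reR x * imR y + reR y * imR x.
Proof. by apply: val_inj; rewrite /= ImM. Qed.
Lemma reRN x : reR (- x) = - reR x.
Proof. by apply: val_inj; rewrite /= raddfN. Qed.
Lemma imRN x : imR (- x) = - imR x.
Proof. by apply: val_inj; rewrite /= raddfN. Qed.
Lemma reR1 : reR 1 = 1.
Proof. by apply: val_inj; rewrite /= (Creal_ReP _ _) ?rpred1. Qed.
Lemma imR1 : imR 1 = 0.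
Proof. by apply: val_inj; rewrite /=; apply/Creal_ImP; rewrite rpred1. Qed.
Lemma reRJ x : reR x^* = reR x.
Proof. by apply: val_inj; rewrite /= Re_conj. Qed.
Lemma imRJ x : imR x^* = - imR x.
Proof. by apply: val_inj; rewrite /= Im_conj. Qed.
Lemma reR_inj x y : reR x = reR y -> imR x = imR y -> x = y.
Proof.
move=> /(congr1 val) /= h1 /(congr1 val) /= h2.
by rewrite [x]Crect [y]Crect h1 h2.
Qed.
Lemma unitR z : `|z| = 1 -> reR z ^+ 2 + imR z ^+ 2 = 1.
Proof.
move=> h; apply: val_inj; rewrite /=.
by rewrite -normC2_Re_Im h expr1n.
Qed.

Lemma L1 (R : realFieldType) (ar ai c s : R) :
  ar^+2 + ai^+2 = 1 -> c^+2 + s^+2 = 1 -> 0 <= ai -> 0 <= s -> c < 1 -> -1 < ar ->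
  0 <= ar * s + ai * c -> ar * c - ai * s < ar.
Proof.
move=> ha hc hai hs hc1 har h.
have [ar0|ar0] := lerP 0 ar.
  have [s0|s0] := eqVneq s 0.
    subst s. have : c = -1 \/ c = 1 by nra. case=> ?; subst c; nra.
  have sp : 0 < s by rewrite lt_def s0.
  have [ar00|arp] := eqVneq ar 0.
    rewrite ar00 in ha *. have : 0 < ai by nra. move=> aip. have : 0 < ai * s by apply: mulr_gt0. lra.
  have arp' : 0 < ar by rewrite lt_def arp.
  have : 0 < ar * (1 - c) by apply: mulr_gt0; lra.
  have : 0 <= ai * s by apply: mulr_ge0.
  lra.
have aip : 0 < ai by nra.
have c0 : 0 <= c by nra.
have sp : 0 < s by nra.
have h1 : ai * (1 + c) > - ar * s by nra.
have h2 : ai * s * s > - ar * (1 - c) * s by nra.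
nra.
Qed.

Lemma L2 (R : realFieldType) (ar ai c s : R) :
  ar^+2 + ai^+2 = 1 -> c^+2 + s^+2 = 1 -> 0 < ai -> 0 <= s ->
  ar * s + ai * c < 0 -> c < ai * s - ar * c.
Proof.
move=> ha hc hai hs h.
have ar1 : -1 < ar by nra.
have [c0|c0] := lerP c 0.
  have [c00|cn] := eqVneq c 0.
    rewrite c00 in hc *. have : 0 < s by nra. move=> sp.
    have : 0 < ai * s by apply: mulr_gt0. lra.
  have cn' : c < 0 by rewrite lt_def eq_sym cn.
  have : 0 <= ai * s by apply: mulr_ge0; lra.
  have : 0 < - c * (1 + ar) by apply: mulr_gt0; lra.
  lra.
have arn : ar < 0 by nra.
have sp : 0 < s by nra.
nra.
Qed.

Lemma L3a (R : realFieldType) (ar ai gr gi : R) :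
  ar^+2 + ai^+2 = 1 -> gr^+2 + gi^+2 = 1 -> 0 <= ai -> 0 <= gi ->
  gr <= ar -> 0 <= gi * ar - gr * ai.
Proof.
move=> ha hg hai hgi h.
have [ar0|ar0] := lerP 0 ar.
  have [gr0|gr0] := lerP 0 gr.
    have : ai <= gi by nra.
    nra.
  nra.
have gr0 : gr < 0 by lra.
have : gi <= ai by nra.
nra.
Qed.

Lemma L3b (R : realFieldType) (ar ai gr gi : R) :
  ar^+2 + ai^+2 = 1 -> gr^+2 + gi^+2 = 1 -> 0 <= ai -> 0 <= gi ->
  0 < gi * ar - gr * ai -> gr < ar.
Proof.
move=> ha hg hai hgi h; rewrite ltNge; apply/negP => h'.
have := L3a hg ha hgi hai h'. lra.
Qed.

Lemma Luniq (R : realFieldType) (ai gi : R) :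
  0 <= ai -> 0 <= gi -> ai ^+ 2 = gi ^+ 2 -> ai = gi.
Proof. by move=> ha hg /eqP; rewrite eqrXn2 // => /eqP. Qed.

Definition up (z : algC) : bool := (0 : algR) <= imR z.

Lemma root_unit (z : algC) n : (0 < n)%N -> z ^+ n = 1 -> `|z| = 1.
Proof.
move=> n0 h; have := congr1 (fun x : algC => `|x|) h; rewrite normrX normr1 => /eqP.
by rewrite pexpr_eq1 ?normr_ge0 -?lt0n // => /eqP.
Qed.

Lemma unit_mul (x y : algC) : `|x| = 1 -> `|y| = 1 -> `|x * y| = 1.
Proof. by move=> hx hy; rewrite normrM hx hy mulr1. Qed.

Lemma unit_N (x : algC) : `|x| = 1 -> `|- x| = 1.
Proof. by rewrite normrN. Qed.

Lemma unit_inv (x : algC) : `|x| = 1 -> x^-1 = x^*.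
Proof. by move=> hx; rewrite invC_norm hx expr1n invr1 mul1r. Qed.

Lemma unit_div (x y : algC) : `|x| = 1 -> `|y| = 1 -> `|x / y| = 1.
Proof. by move=> hx hy; rewrite normrM normfV hx hy invr1 mulr1. Qed.

Lemma reR_div (x y : algC) : `|y| = 1 -> reR (x / y) = reR x * reR y + imR x * imR y.
Proof. by move=> hy; rewrite unit_inv // reRM reRJ imRJ; ring. Qed.
Lemma imR_div (x y : algC) : `|y| = 1 -> imR (x / y) = imR x * reR y - reR x * imR y.
Proof. by move=> hy; rewrite unit_inv // imRM reRJ imRJ; ring. Qed.

Lemma real_unit (x : algC) : `|x| = 1 -> imR x = 0 -> x = 1 \/ x = -1.
Proof.
move=> hx hi; have := unitR hx; rewrite hi expr0n /= addr0 => /eqP.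
rewrite sqrf_eq1 => /orP[]/eqP h.
  by left; apply: reR_inj; rewrite ?h ?reR1 ?imR1.
by right; apply: reR_inj; rewrite ?h ?reRN ?reR1 ?imRN ?imR1 ?oppr0.
Qed.

Lemma unit_re_lt1 (e : algC) : `|e| = 1 -> e != 1 -> reR e < 1.
Proof.
move=> he ne1; have := unitR he; rewrite lt_neqAle => h; apply/andP; split; last by nra.
apply/eqP => r1; have : imR e ^+ 2 = 0 by rewrite r1 in h; lra.
move/eqP; rewrite expf_eq0 /= => /eqP i0.
case: (real_unit he i0) => ee; rewrite ee in r1 ne1; first by rewrite eqxx in ne1.
rewrite reRN reR1 in r1.
have : (-1 : algR) < 1 by lra. by rewrite r1 ltxx.
Qed.

Lemma unit_re_gtN1 (e : algC) : `|e| = 1 -> e != -1 -> -1 < reR e.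
Proof.
move=> he ne1; have := unitR he; rewrite lt_neqAle => h; apply/andP; split; last by nra.
apply/eqP => r1; have : imR e ^+ 2 = 0 by rewrite -r1 in h; lra.
move/eqP; rewrite expf_eq0 /= => /eqP i0.
case: (real_unit he i0) => ee; rewrite ee in r1 ne1; last by rewrite eqxx in ne1.
rewrite reR1 in r1.
have : (-1 : algR) < 1 by lra. by rewrite r1 ltxx.
Qed.

Lemma Cuniq (x y : algC) : `|x| = 1 -> `|y| = 1 -> up x -> up y -> reR x = reR y -> x = y.
Proof.
move=> hx hy ux uy hr; apply: reR_inj => //; apply: Luniq => //.
have := unitR hx; have := unitR hy; rewrite hr; lra.
Qed.

Lemma C_L1 (a e : algC) : `|a| = 1 -> `|e| = 1 -> up a -> up e -> e != 1 -> a != -1 ->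
  up (a * e) -> reR (a * e) < reR a.
Proof.
move=> ha he ua ue e1 a1 uae; rewrite reRM.
apply: L1 (unitR ha) (unitR he) ua ue (unit_re_lt1 he e1) (unit_re_gtN1 ha a1) _.
by move: uae; rewrite /up imRM [reR e * _]mulrC.
Qed.

Lemma C_L2 (a e : algC) : `|a| = 1 -> `|e| = 1 -> (0 : algR) < imR a -> up e ->
  imR (a * e) < 0 -> reR e < reR (- (a * e)).
Proof.
move=> ha he ia ue iae; rewrite reRN reRM opprB.
apply: L2 (unitR ha) (unitR he) ia ue _.
by move: iae; rewrite imRM [reR e * _]mulrC addrC.
Qed.

Lemma C_L3 (a g : algC) : `|a| = 1 -> `|g| = 1 -> up a -> up g -> reR g <= reR a -> up (g / a).
Proof.
move=> ha hg ua ug h; rewrite /up imR_div //.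
by have := L3a (unitR ha) (unitR hg) ua ug h; rewrite [imR g * _]mulrC [reR g * _]mulrC.
Qed.

Lemma C_L3b (x y : algC) : `|x| = 1 -> `|y| = 1 -> up x -> up y -> (0 : algR) < imR (y / x) ->
  reR y < reR x.
Proof.
move=> hx hy ux uy; rewrite imR_div // => h.
exact: L3b (unitR hx) (unitR hy) ux uy h.
Qed.

Lemma C_P3 (x y : algC) : `|x| = 1 -> `|y| = 1 -> imR (y / x) = 0 -> y = x \/ y = - x.
Proof.
move=> hx hy h; have x0 : x != 0 by rewrite -normr_eq0 hx oner_eq0.
case: (real_unit (unit_div hy hx) h) => /eqP; rewrite (can2_eq (divfK x0) (mulfK x0)).
  by rewrite mul1r => /eqP; left.
by rewrite mulN1r => /eqP; right.
Qed.

Definition first2 (N : nat) (eta : algC) :=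
  [/\ eta ^+ (2 * N) = 1, up eta, eta != 1 &
      forall g : algC, g ^+ (2 * N) = 1 -> up g -> g != 1 -> reR g <= reR eta].

Lemma up1 : up 1. Proof. by rewrite /up imR1. Qed.
Lemma upN1 : up (-1). Proof. by rewrite /up imRN imR1 oppr0. Qed.

Lemma expN_even (x : algC) N : (- x) ^+ (2 * N) = x ^+ (2 * N).
Proof. by rewrite !exprM sqrrN. Qed.

Lemma neqN11 : (-1 : algC) != 1.
Proof. by rewrite -subr_eq0 -opprD oppr_eq0 -mulr2n pnatr_eq0. Qed.

Lemma first2_exists N : (0 < N)%N -> exists eta, first2 N eta.
Proof.
move=> N0; have n0 : (0 < 2 * N)%N by rewrite muln_gt0.
have [xi pxi] := C_prim_root_exists n0.
have xiN : xi ^+ N = -1.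
  have : (xi ^+ N) ^+ 2 == 1 by rewrite -exprM mulnC prim_expr_order.
  rewrite sqrf_eq1 => /orP[|/eqP //].
  rewrite -(prim_order_dvd pxi) => /dvdn_leq; rewrite N0 => /(_ isT).
  by rewrite leqNgt -{1}(mul1n N) ltn_mul2r N0.
have lt : (N < 2 * N)%N by rewrite -{1}(mul1n N) ltn_mul2r N0.
pose i0 : 'I_(2 * N) := Ordinal lt.
pose P := [pred i : 'I_(2 * N) | up (xi ^+ i) && (xi ^+ i != 1)].
have Pi0 : P i0 by rewrite /P /= xiN upN1 neqN11.
case: (arg_maxP (fun i : 'I_(2 * N) => reR (xi ^+ i)) Pi0) => i /andP[ui ni] maxi.
exists (xi ^+ i); split => //.
  by rewrite -exprM mulnC exprM (prim_expr_order pxi) expr1n.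
move=> g g1 ug ng; have [j gj] := prim_rootP pxi g1; rewrite gj in ug ng *.
by apply: maxi; rewrite /P /= ug ng.
Qed.

Lemma first2_uniq N e1 e2 : first2 N e1 -> first2 N e2 -> (0 < N)%N -> e1 = e2.
Proof.
move=> [h1 u1 n1 m1] [h2 u2 n2 m2] N0; have N2 : (0 < 2 * N)%N by rewrite muln_gt0.
have hr : reR e1 = reR e2 by apply/le_anti; rewrite (m2 e1) ?(m1 e2).
exact: Cuniq (root_unit N2 h1) (root_unit N2 h2) u1 u2 hr.
Qed.

Lemma f2_march N eta : (0 < N)%N -> first2 N eta -> forall i,
  (forall j, (j < i)%N -> eta ^+ j != -1) ->
  (forall j, (j <= i)%N -> up (eta ^+ j)) /\
  (forall j, (j < i)%N -> reR (eta ^+ j.+1) < reR (eta ^+ j)).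
Proof.
move=> N0 [e2N ue e1 emax]; have N2 : (0 < 2 * N)%N by rewrite muln_gt0.
have he := root_unit N2 e2N.
elim=> [|i IH] hneq.
  by split=> // j; rewrite leqn0 => /eqP ->; rewrite expr0 up1.
have [IHu IHd] := IH (fun j hj => hneq j (leqW hj)).
set a := eta ^+ i; have ua : up a := IHu i (leqnn i).
have an1 : a != -1 := hneq i (ltnSn i).
have ha : `|a| = 1 by rewrite /a normrX he expr1n.
have uae : up (a * eta).
  have [->|a1] := eqVneq a 1; first by rewrite mul1r.
  have ia : (0 : algR) < imR a.
    rewrite lt_def; apply/andP; split; last exact: ua.
    apply/eqP => i0.
    by case: (real_unit ha i0) => aa; [rewrite aa eqxx in a1 | rewrite aa eqxx in an1].
  rewrite /up leNgt; apply/negP => iae.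
  have := C_L2 ha he ia ue iae.
  have : reR (- (a * eta)) <= reR eta.
    apply: emax.
    - by rewrite expN_even exprMn e2N mulr1 /a -exprM mulnC exprM e2N expr1n.
    - by rewrite /up imRN oppr_ge0 ltW.
    - apply/eqP => h; have := congr1 imR h; rewrite imR1 => h'.
      by move: h'; rewrite imRN => /eqP; rewrite oppr_eq0 => /eqP h0; rewrite h0 ltxx in iae.
  by move=> h1 h2; have := le_lt_trans h1 h2; rewrite ltxx.
split.
  move=> j; rewrite leq_eqVlt => /orP[/eqP->|]; first by rewrite exprSr.
  by rewrite ltnS; exact: IHu.
move=> j; rewrite ltnS leq_eqVlt => /orP[/eqP->|hj]; last exact: IHd.
by rewrite exprSr; apply: C_L1.
Qed.

Lemma f2_mono N eta i : (0 < N)%N -> first2 N eta ->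
  (forall j, (j < i)%N -> eta ^+ j != -1) ->
  forall j k, (j < k <= i)%N -> reR (eta ^+ k) < reR (eta ^+ j).
Proof.
move=> N0 H hneq; have [_ dec] := f2_march N0 H hneq.
move=> j; elim=> // k IH /andP[jk ki].
have dk := dec k ki.
move: jk; rewrite ltnS leq_eqVlt => /orP[/eqP->//|jk].
apply: lt_trans dk _; apply: IH; by rewrite jk (ltnW ki).
Qed.

Lemma unit_re_le1 (g : algC) : `|g| = 1 -> reR g <= 1.
Proof. by move=> hg; have := unitR hg; nra. Qed.
Lemma unit_re_geN1 (g : algC) : `|g| = 1 -> -1 <= reR g.
Proof. by move=> hg; have := unitR hg; nra. Qed.

Lemma f2_all N eta : (0 < N)%N -> first2 N eta ->
  [/\ eta ^+ N = -1, (2 * N).-primitive_root eta,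
      (forall j, (j <= N)%N -> up (eta ^+ j)),
      (forall j k, (j < k <= N)%N -> reR (eta ^+ k) < reR (eta ^+ j)) &
      (forall g, g ^+ (2 * N) = 1 -> up g -> exists2 i, (i <= N)%N & g = eta ^+ i)].
Proof.
move=> N0 H; have [e2N ue e1 emax] := H.
have N2 : (0 < 2 * N)%N by rewrite muln_gt0.
have he := root_unit N2 e2N.
have hpow j : `|eta ^+ j| = 1 by rewrite normrX he expr1n.
have ex : exists j, eta ^+ j == -1.
  have [/existsP[j /eqP hj]|no] := boolP [exists j : 'I_(2 * N).+1, eta ^+ j == -1].
    by exists j; rewrite hj.
  have hneq : forall j, (j < 2 * N)%N -> eta ^+ j != -1.
    move=> j jl; apply/negP => hj; move/existsP: no; apply.
    by exists (Ordinal (leqW jl)).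
  have := f2_mono N0 H hneq (j:=0) (k:=2*N); rewrite N2 leqnn e2N expr0 => /(_ isT).
  by rewrite ltxx.
case: (ex_minnP ex) => m /eqP em mmin.
have hneq : forall j, (j < m)%N -> eta ^+ j != -1.
  by move=> j jm; apply/negP => /mmin; rewrite leqNgt jm.
have m0 : (0 < m)%N.
  rewrite lt0n; apply/eqP => m0; move: em; rewrite m0 expr0 => /eqP.
  by rewrite eq_sym (negbTE neqN11).
have [upm decm] := f2_march N0 H hneq.
have mono := f2_mono N0 H hneq.
have e2m : eta ^+ (2 * m) = 1 by rewrite mulnC exprM em sqrrN expr1n.
have m2 : (0 < 2 * m)%N by rewrite muln_gt0.
have nonone : forall j, (0 < j < 2 * m)%N -> eta ^+ j != 1.
  move=> j /andP[j0 jm]; have [jle|jgt] := leqP j m.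
    have := mono 0 j; rewrite j0 jle expr0 => /(_ isT) lt1.
    by apply/eqP => h; rewrite h ltxx in lt1.
  have -> : eta ^+ j = - eta ^+ (j - m).
    by rewrite -{1}(subnKC (ltnW jgt)) exprD em mulN1r.
  rewrite eqr_oppLR; apply: hneq.
  by rewrite ltn_subLR ?(ltnW jgt) // addnn -mul2n.
have primm : (2 * m).-primitive_root eta.
  have [k pk km] := prim_order_exists m2 e2m.
  have k0 := prim_order_gt0 pk.
  have := dvdn_leq m2 km; rewrite leq_eqVlt => /orP[/eqP <- //|klt].
  by have := nonone k; rewrite k0 klt prim_expr_order // eqxx => /(_ isT).
have F2 : forall g, g ^+ (2 * N) = 1 -> up g -> exists2 i, (i <= m)%N & g = eta ^+ i.
  move=> g g1 ug; have hg := root_unit N2 g1.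
  pose Q i := (i <= m)%N && (reR g <= reR (eta ^+ i)).
  have exQ : exists i, Q i by exists 0%N; rewrite /Q leq0n expr0 reR1 unit_re_le1.
  have bQ : forall i, Q i -> (i <= m)%N by move=> i /andP[].
  case: (ex_maxnP exQ bQ) => i /andP[im gi] imax.
  move: im; rewrite leq_eqVlt => /orP[/eqP ie|im].
    have hr : reR g = reR (eta ^+ m).
      rewrite ie em reRN reR1 in gi *; apply/le_anti; rewrite gi.
      by rewrite (unit_re_geN1 hg).
    by exists m => //; exact: (Cuniq hg (hpow m) ug (upm m (leqnn m)) hr).
  have ngi : reR (eta ^+ i.+1) < reR g.
    rewrite ltNge; apply/negP => h.
    by have := imax i.+1; rewrite /Q im h => /(_ isT); rewrite ltnn.
  set a := eta ^+ i; have ha := hpow i; have ua : up a := upm i (ltnW im).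
  have a0 : a != 0 by rewrite -normr_eq0 ha oner_eq0.
  set d := g / a; have ud : up d := C_L3 ha hg ua ug gi.
  have gd : g = d * a by rewrite /d divfK.
  have [d1|dn1] := eqVneq d 1.
    by exists i; [exact: ltnW | rewrite gd d1 mul1r].
  have hd : `|d| = 1 := unit_div hg ha.
  have dmax : reR d <= reR eta.
    apply: emax ud dn1.
    by rewrite /d exprMn exprVn g1 /a -exprM mulnC exprM e2N expr1n invr1 mulr1.
  have ude := C_L3 he hd ue ud dmax.
  have hx : `|a * eta| = 1 := unit_mul ha he.
  have ux : up (a * eta) by rewrite /a -exprSr; apply: upm.
  have de : d / eta = g / (a * eta) by rewrite /d invfM mulrA.
  rewrite de in ude.
  move: ude; rewrite /up le_eqVlt => /orP[/eqP i0|ipos].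
    case: (C_P3 hx hg (esym i0)) => gae.
      by move: ngi; rewrite gae /a exprSr ltxx.
    exfalso; have dN : d = - eta by rewrite /d gae mulNr mulrC mulKf.
    have ie0 : imR eta = 0.
      apply/le_anti/andP; split; last exact: ue.
      by move: ud; rewrite /up dN imRN oppr_ge0.
    case: (real_unit he ie0) => ee; first by rewrite ee eqxx in e1.
    by move: dn1; rewrite dN ee opprK eqxx.
  have := C_L3b hx hg ux ug ipos.
  by rewrite /a -exprSr => h; have := lt_trans h ngi; rewrite ltxx.
have mN : m = N.
  have d1 : (2 * m %| 2 * N)%N by rewrite (prim_order_dvd primm) e2N.
  have [xi pxi] := C_prim_root_exists N2.
  have [xi' pxi' uxi'] : exists2 xi', (2 * N).-primitive_root xi' & up xi'.
    have [uxi|nuxi] := boolP (up xi); first by exists xi.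
    exists xi^*; first by rewrite fmorph_primitive_root.
    by rewrite /up imRJ oppr_ge0 ltW // ltNge.
  have [i _ xie] := F2 xi' (prim_expr_order pxi') uxi'.
  have d2 : (2 * N %| 2 * m)%N.
    by rewrite (prim_order_dvd pxi') xie -exprM mulnC exprM e2m expr1n.
  have : (2 * m == 2 * N)%N by rewrite eqn_dvd d1 d2.
  by rewrite eqn_pmul2l // => /eqP.
subst m; split => //.
Qed.

Lemma up_Im (z : algC) : up z = (0 <= 'Im z).
Proof. by []. Qed.
Lemma le_reR (x y : algC) : (reR x <= reR y) = ('Re x <= 'Re y).
Proof. by []. Qed.

Lemma omega_first2 N : (0 < N)%N -> first2 N (N.-root (-1)).
Proof.
move=> N0; have [eta H] := first2_exists N0.
have [eN prim upj mono F2] := f2_all N0 H.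
have [e2N ue e1 emax] := H.
have N2 : (0 < 2 * N)%N by rewrite muln_gt0.
set w := N.-root (-1).
have wN : w ^+ N = -1 := rootCK N0 (-1).
have w2 : w ^+ (2 * N) = 1 by rewrite mulnC exprM wN sqrrN expr1n.
have uw : up w.
  have [N1|N1] := eqVneq N 1%N.
    by rewrite /w N1 root1C upN1.
  rewrite up_Im; apply: Im_rootC_ge0.
  by rewrite ltn_neqAle eq_sym N1 N0.
have w1 : w != 1.
  by apply/eqP => h; move: wN; rewrite h expr1n => /eqP; rewrite eq_sym (negbTE neqN11).
have h1 : reR w <= reR eta := emax w w2 uw w1.
have h2 : reR eta <= reR w by rewrite le_reR; apply: rootC_Re_max.
have hr : reR w = reR eta by apply/le_anti; rewrite h1 h2.
by rewrite (Cuniq (root_unit N2 w2) (root_unit N2 e2N) uw ue hr).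
Qed.

Lemma omega_coh m d : (0 < m)%N -> (0 < d)%N -> ((m * d).-root (-1 : algC)) ^+ m = d.-root (-1 : algC).
Proof.
move=> m0 d0; have md0 : (0 < m * d)%N by rewrite muln_gt0 m0.
have H := omega_first2 md0; set eta := (m * d).-root (-1) in H *.
have [eN prim upj mono F2] := f2_all md0 H.
apply: (first2_uniq _ (omega_first2 d0) d0).
have mle : (m <= m * d)%N by rewrite leq_pmulr.
split.
- by rewrite -exprM mulnCA prim_expr_order.
- exact: upj.
- rewrite -(prim_order_dvd prim); apply/negP => /(dvdn_leq m0); apply/negP.
  rewrite -ltnNge; apply: leq_ltn_trans mle _.
  by rewrite -[X in (X < _)%N]mul1n ltn_mul2r md0.
- move=> g g1 ug gn1.
  have g2 : g ^+ (2 * (m * d)) = 1 by rewrite mulnCA mulnC exprM g1 expr1n.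
  have [i ile gi] := F2 g g2 ug.
  have i0 : (0 < i)%N by rewrite lt0n; apply/eqP => i0; move: gn1; rewrite gi i0 expr0 eqxx.
  have e : (2 * d * m = 2 * (m * d))%N by rewrite -mulnA (mulnC d m).
  have : (2 * d * m %| 2 * d * i)%N.
    by rewrite e (prim_order_dvd prim) (mulnC (2 * d) i) exprM -gi g1.
  rewrite dvdn_pmul2l ?muln_gt0 // => /(dvdn_leq i0).
  rewrite leq_eqVlt => /orP[/eqP mi|mi]; first by rewrite gi mi.
  by rewrite gi ltW // mono // mi ile.
Qed.


Definition zeta (d : nat) : algC := (d.-root (-1 : algC)) ^+ 2.

Lemma zeta_coh m d : (0 < m)%N -> (0 < d)%N -> zeta (m * d) ^+ m = zeta d.
Proof. by move=> m0 d0; rewrite /zeta exprAC omega_coh. Qed.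

Lemma zeta_prim d : (0 < d)%N -> d.-primitive_root (zeta d).
Proof.
move=> d0; have [_ prim _ _ _] := f2_all d0 (omega_first2 d0).
have := exp_prim_root prim 2.
have -> : gcdn 2 (2 * d) = 2%N by rewrite gcdnC; apply/gcdn_idPr; apply: dvdn_mulr.
by rewrite mulKn.
Qed.

Lemma zeta_neq0 d : (0 < d)%N -> zeta d != 0.
Proof. by move=> d0; rewrite (prim_root_eq0 (zeta_prim d0)) -lt0n. Qed.

Lemma expiE q : expi q = zeta `|denq q|%N ^ numq q.
Proof. by []. Qed.

Lemma denq_abs q : ((`|denq q|%N)%:Z = denq q).
Proof. by rewrite abszE gtr0_norm // denq_gt0. Qed.

Lemma expi_frac (a : int) (b : nat) : (0 < b)%N -> expi (a%:~R / b%:R) = zeta b ^ a.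
Proof.
move=> b0; set q := a%:~R / b%:R; rewrite expiE.
set d := `|denq q|%N; set n := numq q.
have d0 : (0 < d)%N by rewrite /d absz_gt0 denq_neq0.
have cross : n * b%:Z = a * d%:Z.
  apply: (@intr_inj rat); rewrite !rmorphM /= /n numqE /d denq_abs /q.
  have bn0 : (b%:R : rat) != 0 by rewrite pnatr_eq0 -lt0n.
  have dn0 : ((denq (a%:~R / b%:R))%:~R : rat) != 0 by rewrite intr_eq0 denq_neq0.
  rewrite -[((b : int)%:~R : rat)]/(b%:R : rat).
  by field.
set Z := zeta (d * b).
have Zb : zeta b = Z ^+ d by rewrite /Z zeta_coh.
have Zd : zeta d = Z ^+ b by rewrite /Z mulnC zeta_coh.
rewrite Zb Zd !exprnP !exprz_exp.
by rewrite [(b%:Z * n)]mulrC cross mulrC.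
Qed.

Lemma expi_num_den (q : rat) : q = (numq q)%:~R / (`|denq q|%N)%:R.
Proof.
have -> : ((`|denq q|%N)%:R : rat) = ((`|denq q|%N)%:Z)%:~R by [].
by rewrite denq_abs divq_num_den.
Qed.

Lemma denq_abs_gt0 q : (0 < `|denq q|%N)%N.
Proof. by rewrite absz_gt0 denq_neq0. Qed.

Lemma expi_add p q : expi (p + q) = expi p * expi q.
Proof.
set a := numq p; set b := `|denq p|%N; set c := numq q; set d := `|denq q|%N.
have b0 : (0 < b)%N := denq_abs_gt0 p.
have d0 : (0 < d)%N := denq_abs_gt0 q.
have bd0 : (0 < b * d)%N by rewrite muln_gt0 b0.
have bn0 : (b%:R : rat) != 0 by rewrite pnatr_eq0 -lt0n.
have dn0 : (d%:R : rat) != 0 by rewrite pnatr_eq0 -lt0n.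
have ep : p = (a * d%:Z)%:~R / (b * d)%:R.
  rewrite {1}(expi_num_den p) -/a -/b rmorphM natrM /=.
  have e : ((d%:Z)%:~R : rat) = d%:R by [].
  rewrite e; field; by rewrite dn0 bn0.
have eq : q = (c * b%:Z)%:~R / (b * d)%:R.
  rewrite {1}(expi_num_den q) -/c -/d rmorphM natrM /=.
  have e' : ((b%:Z)%:~R : rat) = b%:R by [].
  rewrite e'; field; by rewrite dn0 bn0.
have epq : p + q = (a * d%:Z + c * b%:Z)%:~R / (b * d)%:R.
  by rewrite {1}ep {1}eq rmorphD /= mulrDl.
rewrite epq ep eq !expi_frac //.
by rewrite exprzDr // unitfE zeta_neq0.
Qed.

Lemma zeta1 : zeta 1 = 1.
Proof. by rewrite /zeta root1C sqrrN expr1n. Qed.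

Lemma expi_int (n : int) : expi n%:~R = 1.
Proof. by rewrite expiE numq_int denq_int zeta1 exp1rz. Qed.

Lemma expi_eq1 q : expi q = 1 -> q \is a Num.int.
Proof.
rewrite expiE; set d := `|denq q|%N; set n := numq q => h.
have d0 : (0 < d)%N := denq_abs_gt0 q.
have pz := zeta_prim d0.
have hd : (d %| `|n|)%N.
  rewrite (prim_order_dvd pz); move: h; rewrite /n.
  case: (numq q) => k /=; first by rewrite -exprnP => ->.
  by move=> /eqP; rewrite invr_eq1 => /eqP ->.
have cop := coprime_num_den q; rewrite -/d -/n in cop.
have : gcdn `|n| d = d by apply/gcdn_idPr.
rewrite (eqP cop) => d1.
by rewrite Qint_def -denq_abs -/d -d1.
Qed.

Lemma expi_neq0 q : expi q != 0.
Proof. by rewrite expiE expfz_neq0 ?zeta_neq0 ?denq_abs_gt0. Qed.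

Lemma expi_eqQZ p q : expi p = expi q -> eqQZ p q.
Proof.
move=> h; apply: expi_eq1.
have : expi (p - q) * expi q = expi q by rewrite -expi_add subrK.
move=> e; apply: (mulIf (expi_neq0 q)); by rewrite e mul1r.
Qed.


Definition cyc (sg : {rmorphism algC -> algC}) (n : nat) : nat :=
  odflt 1%N (omap (@nat_of_ord n) [pick i : 'I_n | sg (zeta n) == zeta n ^+ i]).

Lemma cycP (sg : {rmorphism algC -> algC}) n : (0 < n)%N ->
  sg (zeta n) = zeta n ^+ cyc sg n.
Proof.
move=> n0; rewrite /cyc; case: pickP => [i /eqP //|no].
have pz := zeta_prim n0.
have h : (sg (zeta n)) ^+ n = 1 by rewrite -rmorphXn (prim_expr_order pz) rmorph1.
have [i hi] := prim_rootP pz h.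
by have := no i; rewrite hi eqxx.
Qed.

Lemma cyc_coprime sg n : (0 < n)%N -> coprime (cyc sg n) n.
Proof.
move=> n0; have pz := zeta_prim n0.
rewrite -(prim_root_exp_coprime _ pz) -cycP //.
by rewrite fmorph_primitive_root.
Qed.

Lemma cyc_compat sg m n : (0 < n)%N -> (0 < m)%N -> (n %| m)%N ->
  (cyc sg m == cyc sg n %[mod n])%N.
Proof.
move=> n0 m0 nm; have pz := zeta_prim n0.
have k0 : (0 < m %/ n)%N by rewrite divn_gt0 // dvdn_leq.
have e : zeta n = zeta m ^+ (m %/ n).
  by rewrite -[in zeta m](divnK nm) zeta_coh.
have : sg (zeta n) = zeta n ^+ cyc sg m.
  by rewrite {1}e rmorphXn cycP // -exprM mulnC exprM -e.
rewrite cycP // => /eqP; rewrite (eq_prim_root_expr pz) eq_sym.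
by [].
Qed.

Definition cycz sg (n : nat) : int := (cyc sg n)%:Z.

Lemma cycz_unit sg : zhat_unit (cycz sg).
Proof.
split.
  move=> n n0; rewrite /coprimez /gcdz /cycz /=.
  by rewrite (eqP (cyc_coprime sg n0)).
move=> m n n0 m0 nm; rewrite /cycz !modz_nat.
by rewrite eqz_nat (cyc_compat sg n0 m0 nm).
Qed.

Lemma sigma_expi (sg : {rmorphism algC -> algC}) q : sg (expi q) = expi (zhat_act (cycz sg) q).
Proof.
have d0 := denq_abs_gt0 q.
rewrite /zhat_act expiE fmorphXz cycP //.
have hd : ((denq q)%:~R : rat) = (`|denq q|%N)%:R by rewrite -[in LHS]denq_abs.
rewrite hd expi_frac //.
by rewrite exprnP exprz_exp.
Qed.


Lemma char_poly_sim (F : fieldType) n (M A : 'M[F]_n) : M \in unitmx ->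
  char_poly (M *m A *m invmx M) = char_poly A.
Proof.
move=> uM; rewrite /char_poly.
set Mp := map_mx polyC M; set Mi := map_mx polyC (invmx M).
have MMi : Mp *m Mi = 1%:M by rewrite -map_mxM mulmxV // map_mx1.
have MiM : Mi *m Mp = 1%:M by rewrite -map_mxM mulVmx // map_mx1.
have -> : char_poly_mx (M *m A *m invmx M) = Mp *m char_poly_mx A *m Mi.
  rewrite /char_poly_mx !map_mxM -/Mp -/Mi mulmxBr mulmxBl.
  rewrite mul_mx_scalar -scalemxAl MMi scalemx1; congr (_ - _).
rewrite !det_mulmx mulrAC -det_mulmx MMi det1. exact: mul1r.
Qed.

Lemma ord2_cases (j : 'I_2) : j = ord0 \/ j = lift ord0 ord0.
Proof.
case: j => [[|[|k]]] hj; [left|right|by []]; by apply: val_inj.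
Qed.

Lemma prod2_perm (u v : 'I_2 -> algC) :
  \prod_(j < 2) ('X - (u j)%:P) = \prod_(j < 2) ('X - (v j)%:P) ->
  exists p : 'S_2, forall j, u j = v (p j).
Proof.
set i0 : 'I_2 := ord0; set i1 : 'I_2 := lift ord0 ord0.
have e w : \prod_(j < 2) ('X - (w j)%:P) = ('X - (w i0)%:P) * ('X - (w i1)%:P) :> {poly algC}.
  by rewrite big_ord_recl big_ord1.
rewrite !e => h.
have r : root (('X - (v i0)%:P) * ('X - (v i1)%:P)) (u i0).
  by rewrite -h rootM root_XsubC eqxx.
have nz w : ('X - w%:P : {poly algC}) != 0 by rewrite polyXsubC_eq0.
rewrite rootM !root_XsubC in r; case/orP: r => /eqP r.
  exists 1%g => j; rewrite perm1.
  have : ('X - (u i1)%:P) = ('X - (v i1)%:P) :> {poly algC}.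
    by apply: (mulfI (nz (u i0))); rewrite h r.
  move/(congr1 (fun p => - p + 'X)); rewrite !opprB !subrK => /polyC_inj e1.
  by case: (ord2_cases j) => ->.
exists (tperm i0 i1) => j.
have : ('X - (u i1)%:P) = ('X - (v i0)%:P) :> {poly algC}.
  by apply: (mulfI (nz (u i0))); rewrite h r mulrC.
move/(congr1 (fun p => - p + 'X)); rewrite !opprB !subrK => /polyC_inj e1.
by case: (ord2_cases j) => ->; rewrite ?tpermL ?tpermR.
Qed.

Lemma transport (K : fieldExtType rat) n (rho : {rmorphism K -> 'M[rat]_n})
  (chi0 chi : {rmorphism K -> algC}) (T : 'M[rat]_n) (a0 a : 'I_2 -> rat)
  (sg : {rmorphism algC -> algC}) :
  (forall x, sg (chi0 x) = chi x) -> eigen_exps rho chi0 T a0 -> eigen_exps rho chi T a ->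
  exists p : 'S_2, forall j, sg (expi (a0 j)) = expi (a (p j)).
Proof.
move=> hs [B0 [A0 [hB0 rf0 eB0 cp0]]] [B [A [hB rf eB cp]]].
have mr p q (M : 'M[rat]_(p, q)) : map_mx sg (map_mx ratr M) = map_mx ratr M.
  by apply/matrixP => i j; rewrite !mxE fmorph_rat.
set B0' := map_mx sg B0; set A0' := map_mx sg A0.
have sub : (B0' <= B)%MS.
  apply/row_subP => i; apply/hB => x; rewrite -map_row.
  have := (hB0 (row i B0)).1 (row_sub i B0) x.
  by move/(congr1 (map_mx sg)); rewrite map_mxM map_mxZ mr hs.
have rB0' : \rank B0' = 2%N by rewrite mxrank_map; apply/eqP.
set M := B0' *m pinvmx B.
have BM : M *m B = B0' by apply: mulmxKpV.
have uM : M \in unitmx.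
  rewrite -row_free_unit /row_free eqn_leq rank_leq_row /=.
  by rewrite -{1}rB0' -BM mxrankM_maxl.
have e1 : B0' *m map_mx ratr T = A0' *m B0'.
  by rewrite -(mr _ _ T) -map_mxM eB0 map_mxM.
have e2 : (M *m A) *m B = (A0' *m M) *m B.
  by rewrite -mulmxA -eB mulmxA BM e1 -BM mulmxA.
have e3 : M *m A = A0' *m M := row_free_inj rf e2.
have e4 : A0' = M *m A *m invmx M by rewrite e3 mulmxK.
have cpe : char_poly A0' = char_poly A by rewrite e4 char_poly_sim.
apply: (@prod2_perm (fun j => sg (expi (a0 j))) (fun j => expi (a j))); rewrite -cp -cpe /A0' -map_char_poly cp0 rmorph_prod.
by apply: eq_bigr => j _; rewrite /= map_polyXsubC.
Qed.


Lemma conj_autC (z w : algC) :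
  (forall q : {poly rat}, (map_poly ratr q).[z] = 0 -> (map_poly ratr q).[w] = 0) ->
  exists sg : {rmorphism algC -> algC}, sg z = w.
Proof.
move=> hzw.
have [p [Dp mon] dv] := minCpolyP z.
set P := map_poly ratr p : {poly algC}.
have Pz : P.[z] = 0 by apply/eqP; rewrite -/(root P z) /P -Dp root_minCpoly.
have Pw : P.[w] = 0 := hzw p Pz.
have [r Dr] := closed_field_poly_normal P.
have lP : lead_coef P = 1 by rewrite /P lead_coef_map (monicP mon) rmorph1.
rewrite lP scale1r in Dr.
have [Qs [QsC [r1 Dr1 genQs]]] := num_field_exists r.
have QsCalg (a : rat) : QsC (in_alg Qs a) = ratr a.
  by rewrite /= alg_num_field fmorph_rat.
have pQs : map_poly (in_alg Qs) p = \prod_(y <- r1) ('X - y%:P).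
  apply: (@map_poly_inj _ _ QsC); rewrite -map_poly_comp rmorph_prod /=.
  rewrite (eq_map_poly QsCalg) -/P Dr -Dr1 big_map.
  by apply: eq_bigr => y _; rewrite map_polyXsubC.
have Qs_ax : FieldExt_isSplittingField _ Qs.
  constructor; exists (map_poly (in_alg Qs) p).
    by apply/polyOver1P; exists p.
  by exists r1; rewrite ?pQs ?eqpxx.
pose L := HB.pack_for (splittingFieldType rat) Qs Qs_ax.
have memr (y : algC) : P.[y] = 0 -> exists2 y1, y1 \in r1 & QsC y1 = y.
  move=> Py; have : y \in r by rewrite -root_prod_XsubC -Dr /root Py.
  by rewrite -Dr1 => /mapP[y1 hy1 ->]; exists y1.
have [z1 _ Dz] := memr z Pz.
have [w1 _ Dw] := memr w Pw.
have rootw : root (minPoly 1 (z1 : L)) (w1 : L).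
  have /polyOver1P[q Dq] := minPolyOver 1 (z1 : L).
  have hq : (map_poly ratr q).[z] = 0.
    have : root (minPoly 1 (z1 : L)) z1 := root_minPoly 1 z1.
    rewrite Dq => /eqP /(congr1 QsC); rewrite rmorph0 -Dz -horner_map /=.
    by rewrite -map_poly_comp (eq_map_poly QsCalg).
  have := hzw q hq; rewrite Dq /root -Dw -(eq_map_poly QsCalg) map_poly_comp horner_map /=.
  by move/eqP; rewrite fmorph_eq0.
have [x _ xz] := normalField_root_minPoly (sub1v _) (normalFieldf 1) (memvf (z1 : L)) rootw.
have [sg Dsg] := extend_algC_subfield_aut QsC x.
by exists sg; rewrite -Dz -Dsg -Dw; congr (QsC _); exact: xz.
Qed.


Lemma eps_add (K : fieldExtType rat) l (k : 'I_l) (chi : {rmorphism K -> algC}) x y :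
  eps_chi k chi (x + y) = eps_chi k chi x + eps_chi k chi y.
Proof.
rewrite /eps_chi -big_split /=; apply: eq_bigr => g _.
by rewrite ffunE rmorphD mulrDl.
Qed.

Lemma eps_0 (K : fieldExtType rat) l (k : 'I_l) (chi : {rmorphism K -> algC}) :
  eps_chi k chi 0 = 0.
Proof. by rewrite /eps_chi big1 // => g _; rewrite ffunE rmorph0 mul0r. Qed.

Lemma eps_scale (K : fieldExtType rat) l (k : 'I_l) (chi : {rmorphism K -> algC}) (c : rat) x :
  eps_chi k chi (c *: x) = ratr c * eps_chi k chi x.
Proof.
rewrite /eps_chi mulr_sumr; apply: eq_bigr => g _.
by rewrite ffunE rmorphZ_num mulrA.
Qed.

Lemma eps_sub (K : fieldExtType rat) l (k : 'I_l) (chi : {rmorphism K -> algC}) x y :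
  eps_chi k chi (x - y) = eps_chi k chi x - eps_chi k chi y.
Proof.
by rewrite eps_add -scaleN1r eps_scale rmorphN1 mulN1r.
Qed.

Lemma eps_sum (K : fieldExtType rat) l (k : 'I_l) (chi : {rmorphism K -> algC}) I (r : seq I) F :
  eps_chi k chi (\sum_(i <- r) F i) = \sum_(i <- r) eps_chi k chi (F i).
Proof.
elim: r => [|i r IH]; first by rewrite !big_nil eps_0.
by rewrite !big_cons eps_add IH.
Qed.

Lemma eps_muln (K : fieldExtType rat) l (k : 'I_l) (chi : {rmorphism K -> algC}) x n :
  eps_chi k chi (x *+ n) = eps_chi k chi x *+ n.
Proof. by elim: n => [|n IH]; rewrite ?mulr0n ?eps_0 // !mulrS eps_add IH. Qed.

Definition del (K : fieldExtType rat) l (g : 'I_l) (a : K) : {ffun 'I_l -> K} :=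
  [ffun h => if h == g then a else 0].

Lemma eps_del (K : fieldExtType rat) l (k : 'I_l) (chi : {rmorphism K -> algC}) g a :
  eps_chi k chi (del g a) = chi a * expi ((g * k)%:R / l%:R).
Proof.
rewrite /eps_chi (bigD1 g) //= big1 ?addr0 => [|h hg]; first by rewrite ffunE eqxx.
by rewrite ffunE (negbTE hg) rmorph0 mul0r.
Qed.

Lemma expi0 : expi 0 = 1.
Proof. by rewrite expiE expr0z. Qed.

Lemma expi_nat n : expi n%:R = 1.
Proof. by have := expi_int n%:Z. Qed.

Lemma expi_mod l (hl : (0 < l)%N) (k g h : nat) :
  expi ((((g + h) %% l) * k)%:R / l%:R) = expi ((g * k)%:R / l%:R) * expi ((h * k)%:R / l%:R).
Proof.
rewrite -expi_add -mulrDl -natrD -mulnDl.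
have ln0 : (l%:R : rat) != 0 by rewrite pnatr_eq0 -lt0n.
have e : (((g + h) * k)%:R / l%:R : rat) = ((g + h) %/ l * k)%:R + (((g + h) %% l) * k)%:R / l%:R.
  rewrite {1}(divn_eq (g + h) l) mulnDl natrD mulrDl; congr (_ + _).
  by rewrite mulnAC natrM mulfK.
by rewrite e expi_add expi_nat mul1r.
Qed.

Definition addo l (hl : (0 < l)%N) (g h : 'I_l) : 'I_l := Ordinal (ltn_pmod (g + h) hl).

Definition conv (K : fieldExtType rat) l (hl : (0 < l)%N) (x y : {ffun 'I_l -> K}) :=
  \sum_(g < l) \sum_(h < l) del (addo hl g h) (x g * y h).

Lemma eps_conv (K : fieldExtType rat) l (hl : (0 < l)%N) (k : 'I_l) (chi : {rmorphism K -> algC}) x y :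
  eps_chi k chi (conv hl x y) = eps_chi k chi x * eps_chi k chi y.
Proof.
rewrite /conv eps_sum {3}/eps_chi mulr_suml; apply: eq_bigr => g _.
rewrite eps_sum /eps_chi mulr_sumr; apply: eq_bigr => h _.
rewrite -/(eps_chi k chi _) eps_del /addo /= expi_mod // rmorphM.
by rewrite mulrACA.
Qed.

Definition one (K : fieldExtType rat) l (hl : (0 < l)%N) : {ffun 'I_l -> K} := del (Ordinal hl) 1.

Lemma eps_one (K : fieldExtType rat) l (hl : (0 < l)%N) (k : 'I_l) (chi : {rmorphism K -> algC}) :
  eps_chi k chi (one K hl) = 1.
Proof. by rewrite eps_del rmorph1 mul1r /= mul0n mul0r expi0. Qed.

Lemma eps_poly (K : fieldExtType rat) l (hl : (0 < l)%N) (k0 k : 'I_l)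
  (chi0 chi : {rmorphism K -> algC}) x0 (q : {poly rat}) :
  exists y, eps_chi k0 chi0 y = (map_poly ratr q).[eps_chi k0 chi0 x0] /\
            eps_chi k chi y = (map_poly ratr q).[eps_chi k chi x0].
Proof.
elim/poly_ind: q => [|q c [y [h1 h2]]].
  exists 0; rewrite !eps_0 (map_poly0 (ratr : rat -> algC)) !hornerE; by split.
exists (conv hl y x0 + c *: one K hl).
rewrite !eps_add !eps_scale !eps_conv !eps_one h1 h2 rmorphD rmorphM /= map_polyX map_polyC.
by rewrite !hornerMXaddC mulr1.
Qed.


Lemma sigma_seq (K : fieldExtType rat) l (hl : (0 < l)%N) (k0 k : 'I_l)
  (chi0 chi : {rmorphism K -> algC})
  (hI : same_factor (eps_chi k0 chi0) (eps_chi k chi)) (ys : seq {ffun 'I_l -> K}) :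
  exists sg : {rmorphism algC -> algC},
    forall y, y \in ys -> sg (eps_chi k0 chi0 y) = eps_chi k chi y.
Proof.
set phi0 := eps_chi k0 chi0; set phi := eps_chi k chi.
have ker y : phi0 y = 0 -> phi y = 0 := fun h => (hI y).1 h.
have [z [a Dz] [ps Ds]] := algC_PET (map phi0 ys).
set x0 := \sum_(i < size (map phi0 ys)) ys`_i *+ a i.
have z0 : phi0 x0 = z.
  rewrite Dz /x0 /phi0 (eps_sum k0 chi0 (index_enum _)) .
  apply: eq_bigr => i _; rewrite eps_muln (nth_map 0) //.
  by rewrite -(size_map phi0).
set w := phi x0.
have hzw : forall q : {poly rat}, (map_poly ratr q).[z] = 0 -> (map_poly ratr q).[w] = 0.
  move=> q hq; have [y [h1 h2]] := eps_poly hl k0 k chi0 chi x0 q.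
  by rewrite -/phi0 -/phi -/w z0 hq in h1 h2; rewrite -h2; apply: ker.
have [sg sgz] := conj_autC hzw.
have sgq (q : {poly rat}) : sg ((map_poly ratr q).[z]) = (map_poly ratr q).[w].
  rewrite -horner_map sgz -map_poly_comp; congr (_.[_]).
  by apply: eq_map_poly => c /=; rewrite fmorph_rat.
exists sg => y /(nthP 0) [i ilt <-].
have szps : size ps = size ys by rewrite -(size_map phi0) Ds size_map.
have e1 : phi0 ys`_i = (map_poly ratr ps`_i).[z].
  rewrite -(nth_map 0 0 phi0 ilt) Ds (nth_map 0) //.
  by rewrite szps.
have [y' [h1 h2]] := eps_poly hl k0 k chi0 chi x0 ps`_i.
rewrite -/phi0 -/phi -/w z0 in h1 h2.
have : phi (ys`_i - y') = 0 by apply: ker; rewrite /phi0 eps_sub -/phi0 e1 h1 subrr.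
rewrite /phi eps_sub -/phi => /eqP; rewrite subr_eq0 => /eqP ->.
by rewrite e1 sgq h2.
Qed.

Unset Implicit Arguments.

Theorem lemma3p1
  (K : fieldExtType rat) (n : nat) (rho : {rmorphism K -> 'M[rat]_n})
  (T0 T1 Tinf : 'M[rat]_n)
  (alpha beta : {rmorphism K -> algC} -> 'I_2 -> rat)
  (rank2 : n = (2 * \dim {:K})%N)
  (T0u : T0 \in unitmx) (T1u : T1 \in unitmx) (Tinfu : Tinf \in unitmx)
  (T0c : forall x : K, T0 *m rho x = rho x *m T0)
  (T1c : forall x : K, T1 *m rho x = rho x *m T1)
  (Tinfc : forall x : K, Tinf *m rho x = rho x *m Tinf)
  (T1unip : (T1 - 1%:M) ^+ n = 0)
  (T1rk : (\rank (logU T1) * 2)%N = n)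
  (halpha : forall chi, eigen_exps rho chi T0 (alpha chi))
  (hbeta : forall chi, eigen_exps rho chi Tinf (beta chi))
  (l : nat) (hl : (0 < l)%N) (k0 k : 'I_l) (chi0 chi : {rmorphism K -> algC})
  (hI : same_factor (eps_chi k0 chi0) (eps_chi k chi)) :
  exists s : nat -> int, zhat_unit s /\
    exists (sa sb : 'S_2), forall j : 'I_2,
      eqQZ (zhat_act s (k0%:R / l%:R + alpha chi0 j)) (k%:R / l%:R + alpha chi (sa j)) /\
      eqQZ (zhat_act s (k0%:R / l%:R + beta chi0 j)) (k%:R / l%:R + beta chi (sb j)).
Proof.
pose o : 'I_l := Ordinal hl.
pose g1 : 'I_l := Ordinal (ltn_pmod 1 hl).
pose bs := vbasis {:K}.
pose ys := del g1 1 :: [seq del o b | b <- bs].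
have [sg hs] := sigma_seq hl hI ys.
have hb b : b \in bs -> sg (chi0 b) = chi b.
  move=> bb; have := hs (del o b); rewrite inE map_f ?orbT // => /(_ isT).
  by rewrite !eps_del /= !mul0n !mul0r expi0 !mulr1.
have hchi a : sg (chi0 a) = chi a.
  rewrite (coord_vbasis (memvf a)) !rmorph_sum /=; apply: eq_bigr => i _.
  rewrite !rmorphZ_num rmorphM fmorph_rat hb //.
  by apply: mem_nth; rewrite size_tuple.
have m1 (j : nat) : (j < l)%N -> ((1 %% l) * j)%N = j.
  move=> jl; have [l1|l1] := eqVneq l 1%N.
    by move: jl; rewrite l1 ltnS leqn0 => /eqP ->; rewrite muln0.
  by rewrite modn_small ?mul1n // ltn_neqAle eq_sym l1 hl.
have hz : sg (expi (k0%:R / l%:R)) = expi (k%:R / l%:R).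
  have := hs (del g1 1); rewrite inE eqxx => /(_ isT).
  by rewrite !eps_del /= (m1 _ (ltn_ord k0)) (m1 _ (ltn_ord k)) !rmorph1 !mul1r.
have [pa hpa] := transport hchi (halpha chi0) (halpha chi).
have [pb hpb] := transport hchi (hbeta chi0) (hbeta chi).
exists (cycz sg); split; first exact: cycz_unit.
exists pa, pb => j; split; apply: expi_eqQZ;
  by rewrite -sigma_expi !expi_add rmorphM hz ?hpa ?hpb.
Qed.
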